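(* Let $n\geq 5$ be an odd prime and $q=2^f$ for some positive integer $f$. If $P_q^n=\{r\}$, then $r\geq 4nf+1$.
   Context: For integers $x\geq 2$ and $m\geq 1$, $P_x^m$ denotes the set of primitive prime divisors of $x^m-1$, i.e. primes dividing $x^m-1$ but not dividing $x^i-1$ for any $1\leq i<m$. *)

(* Defs.v *)
From mathcomp Require Import all_boot.

Definition ppd (x m p : nat) : bool :=
  [&& prime p, p %| x ^ m - 1 & [forall i : 'I_m, (0 < i) ==> ~~ (p %| x ^ i - 1)]].

(* Main.v *)
Require Import Defs.
From mathcomp Require Import all_boot.
From mathcomp Require Import zify ring.
Set Implicit Arguments. Unset Strict Implicit.


Fixpoint gs (x m : nat) : nat := if m is m'.+1 then gs x m' + x ^ m' else 0.

Lemma gs_id x m : 0 < x -> (x - 1) * gs x m + 1 = x ^ m.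
Proof.
case: x => // x _; rewrite subSS subn0.
elim: m => [|m IH] /=; first by rewrite muln0.
rewrite expnS -IH; ring.
Qed.

Lemma gs_sub x m : 0 < x -> x ^ m - 1 = (x - 1) * gs x m.
Proof. by move=> /(gs_id m) <-; rewrite addnK. Qed.

Lemma gs_add x a b : gs x (a + b) = gs x a + x ^ a * gs x b.
Proof.
elim: b => [|b IH]; first by rewrite addn0 /= muln0 addn0.
by rewrite addnS /= IH mulnDr expnD addnA.
Qed.

Lemma gs_mulm x k m : gs x (k * m) = gs x k * gs (x ^ k) m.
Proof.
elim: m => [|m IH]; first by rewrite muln0 /= muln0.
rewrite mulnS addnC gs_add IH /= mulnDr -expnM (mulnC k m); ring.
Qed.

Lemma gs_mod x m d : x = 1 %[mod d] -> gs x m = m %[mod d].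
Proof.
move=> Hx; elim: m => [|m IH] //=.
by rewrite -modnDm IH -modnXm Hx modnXm exp1n modnDm addn1.
Qed.

Lemma gs_odd x m : odd x -> odd (gs x m) = odd m.
Proof.
move=> Hx; elim: m => [|m IH] //=.
by rewrite oddD IH oddX Hx orbT addbT.
Qed.

Lemma gs_ge_m x m : 0 < x -> m <= gs x m.
Proof.
move=> Hx; elim: m => [|m IH] //=.
by rewrite -addn1 leq_add // expn_gt0 Hx.
Qed.

Lemma gs_ge_last x m : 0 < m -> x ^ m.-1 <= gs x m.
Proof. by case: m => // m _ /=; rewrite leq_addl. Qed.

Lemma gs_gtn x m : 1 < x -> 1 < m -> m < gs x m.
Proof.
move=> Hx; case: m => // [[]] // m _.
have h1 := @gs_ge_m x m.+1 (ltnW Hx).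
have h2 : x <= x ^ m.+1 by rewrite -{1}(expn1 x) leq_pexp2l // ltnW.
have -> : gs x m.+2 = gs x m.+1 + x ^ m.+1 by []. move: h1 h2; set X := x ^ m.+1; set G := gs x m.+1; lia.
Qed.

Lemma gs_shift x m : gs x m.+1 = 1 + x * gs x m.
Proof.
elim: m => [|m IH]; first by rewrite /= muln0.
have -> : gs x m.+2 = gs x m.+1 + x ^ m.+1 by [].
rewrite {1}IH; change (gs x m.+1) with (gs x m + x ^ m); rewrite expnS; ring.
Qed.

Lemma pow_lin x p t : x = t * p + 1 -> forall i, exists c, x ^ i = 1 + i * t * p + c * p ^ 2.
Proof.
move=> -> ; elim=> [|i [c IH]]; first by exists 0; rewrite expn0 mul0n.
exists (c + i * t * t + c * t * p); rewrite expnS IH; ring.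
Qed.

Lemma gs_lin x p t : x = t * p + 1 -> forall m, exists C, gs x m = m + t * p * 'C(m, 2) + C * p ^ 2.
Proof.
move=> Hx; elim=> [|m [C IH]]; first by exists 0; rewrite bin0n /= !muln0.
have [c Hc] := pow_lin Hx m.
exists (C + c); rewrite /= IH Hc binS bin1; ring.
Qed.

Lemma gs_sq x p : prime p -> 2 < p -> x = 1 %[mod p] -> ~~ (p ^ 2 %| gs x p).
Proof.
move=> pp p2 Hx.
have p1 := prime_gt1 pp.
have Hx' : x = (x %/ p) * p + 1.
  by rewrite {1}(divn_eq x p) Hx modn_small.
have [C HC] := gs_lin Hx' p.
have : p %| 'C(p, 2) by apply: prime_dvd_bin; rewrite // (ltnW p2).
case/dvdnP => w Hw.
rewrite HC Hw.
have -> : p + x %/ p * p * (w * p) + C * p ^ 2 = p + (x %/ p * w + C) * p ^ 2 by ring.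
rewrite dvdn_addl; last by apply: dvdn_mull.
apply/negP => /dvdn_leq; rewrite prime_gt0 // => /(_ isT).
rewrite expnS expn1; nia.
Qed.


Lemma E_dvd x p e : 0 < x -> (p %| x ^ e - 1) = (x ^ e == 1 %[mod p]).
Proof. by move=> x0; rewrite eqn_mod_dvd // expn_gt0 x0. Qed.

Lemma E_mul x p a k : x ^ a = 1 %[mod p] -> x ^ (a * k) = 1 %[mod p].
Proof. by move=> H; rewrite expnM -modnXm H modnXm exp1n. Qed.

Lemma E_gcd x p a b : x ^ a = 1 %[mod p] -> x ^ b = 1 %[mod p] ->
  x ^ (gcdn a b) = 1 %[mod p].
Proof.
move=> Ha Hb; case: (posnP a) => [->|a0]; first by rewrite gcd0n.
case: (egcdnP b a0) => km kn Hdef _.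
have H1 : x ^ (kn * b + gcdn a b) = 1 %[mod p].
  by rewrite -Hdef mulnC E_mul.
by rewrite (mulnC kn b) expnD -modnMml (E_mul kn Hb) modnMml mul1n in H1.
Qed.

Lemma order_ex x p e0 : 0 < e0 -> x ^ e0 = 1 %[mod p] ->
  exists o, 0 < o /\ (forall e, (x ^ e == 1 %[mod p]) = (o %| e)).
Proof.
move=> e00 He0.
have exP : exists e, (0 < e) && (x ^ e == 1 %[mod p]) by exists e0; rewrite e00 He0 eqxx.
case: (ex_minnP exP) => o /andP [o0 /eqP Ho] omin.
exists o; split => // e; apply/idP/idP => [/eqP He | /dvdnP [k ->]].
  have Hg := E_gcd Ho He.
  have g0 : 0 < gcdn o e by rewrite gcdn_gt0 o0.
  have := omin _ (introT andP (conj g0 (introT eqP Hg))).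
  move=> le; apply/gcdn_idPl/eqP; rewrite eqn_leq le andbT.
  by apply: dvdn_leq => //; apply: dvdn_gcdl.
by apply/eqP; rewrite mulnC E_mul.
Qed.

Lemma fermat1 a p : prime p -> ~~ (p %| a) -> a ^ p.-1 = 1 %[mod p].
Proof.
move=> pp pa.
have a0 : 0 < a by case: a pa => //; rewrite dvdn0.
have := fermat_little a pp.
have -> : a ^ p = a * a ^ p.-1 by rewrite -expnS prednK ?prime_gt0.
have le1 : a <= a * a ^ p.-1 by rewrite leq_pmulr // expn_gt0 a0.
move/eqP; rewrite eqn_mod_dvd // -[X in _ - X](muln1 a).
rewrite -mulnBr Gauss_dvdr ?prime_coprime // => H.
by apply/eqP; rewrite -E_dvd.
Qed.

Lemma gsn_dvd x n s : 0 < x -> s %| x - 1 -> s %| gs x n -> s %| n.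
Proof.
move=> x0 Hs; have Hx : x = 1 %[mod s] by apply/eqP; rewrite -(expn1 x) -E_dvd // expn1.
by rewrite /dvdn -(gs_mod n Hx).
Qed.

Lemma P1 n u : prime n -> 0 < u -> (forall s, prime s -> s %| u -> s = n) ->
  ~~ (n ^ 2 %| u) -> u = 1 \/ u = n.
Proof.
move=> pn u0 Hs Hn2.
case: (ltngtP u 1) => [|u1|->]; [by rewrite ltnS leqn0 => /eqP H; rewrite H in u0 | | by left].
have Hpd : pdiv u = n by apply: Hs; [apply: pdiv_prime | apply: pdiv_dvd].
have : n %| u by rewrite -Hpd pdiv_dvd.
case/dvdnP => u' Hu; right.
case: (ltngtP u' 1) => [|u'1|Hu1]; last by rewrite Hu Hu1 mul1n.
  by rewrite ltnS leqn0 => /eqP H; rewrite Hu H in u0.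
have : pdiv u' = n by apply: Hs; [apply: pdiv_prime | rewrite Hu dvdn_mulr // pdiv_dvd].
move=> H'; have : n %| u' by rewrite -H' pdiv_dvd.
case/dvdnP => u2 Hu2; move: Hn2; rewrite Hu Hu2 -mulnA mulnn; by rewrite dvdn_mull.
Qed.


Lemma T x n : prime n -> 2 < n -> 1 < x ->
  exists s, [/\ prime s, s %| gs x n & ~~ (s %| x - 1)].
Proof.
move=> pn n2 x1.
have x0 : 0 < x by apply: ltnW.
set u := gs x n.
have nu : n < u by apply: gs_gtn => //; apply: ltnW.
case: (boolP (has (fun s => ~~ (s %| x - 1)) (primes u))) => [/hasP [s Hs Hsx] | /hasPn Hno].
  by move: Hs; rewrite mem_primes => /and3P [ps _ su]; exists s.
have u0 : 0 < u by apply: leq_ltn_trans nu.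
have Hs : forall s, prime s -> s %| u -> s = n.
  move=> s ps su.
  have sx : s %| x - 1 by apply: negbNE; apply: Hno; rewrite mem_primes ps u0.
  have := gsn_dvd x0 sx su.
  by rewrite dvdn_prime2 // => /eqP.
have u1 : 1 < u by apply: leq_ltn_trans nu; apply: ltnW; apply: ltnW.
have pdn : pdiv u = n by apply: Hs; [apply: pdiv_prime | apply: pdiv_dvd].
have nx : n %| x - 1.
  by apply: negbNE; apply: Hno; rewrite mem_primes -pdn pdiv_prime // u0 pdiv_dvd.
have Hx : x = 1 %[mod n] by apply/eqP; rewrite -(expn1 x) -E_dvd // expn1.
have := P1 pn u0 Hs (gs_sq pn n2 Hx).
by case=> Hu; rewrite Hu in nu; move: nu n2; clear; lia.
Qed.

Lemma gs_dvd_iff y p m : y = 1 %[mod p] -> (p %| gs y m) = (p %| m).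
Proof. by move=> Hy; rewrite /dvdn gs_mod. Qed.

Lemma gs_pos x m : 0 < x -> 0 < m -> 0 < gs x m.
Proof. by move=> x0 m0; apply: leq_trans m0 (gs_ge_m _ x0). Qed.

Lemma lte y p m : prime p -> 2 < p -> y = 1 %[mod p] -> 0 < y -> 0 < m ->
  logn p (gs y m) <= logn p m.
Proof.
move=> pp p2 Hy y0.
elim: m {-2}m (leqnn m) => [|M IH] m Hm m0; first by move: m0; rewrite leqNgt (leq_ltn_trans Hm).
case: (boolP (p %| m)) => pm; last first.
  by rewrite logn_coprime // prime_coprime // gs_dvd_iff.
case/dvdnP: pm => k Hk.
have p1 := prime_gt1 pp.
have k0 : 0 < k by move: m0; rewrite Hk muln_gt0 => /andP [].
have km : k < m by rewrite Hk ltn_Pmulr.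
have Hyk : y ^ k = 1 %[mod p] by rewrite -modnXm Hy modnXm exp1n.
have yk0 : 0 < y ^ k by rewrite expn_gt0 y0.
rewrite Hk gs_mulm (lognM p (gs_pos y0 k0) (gs_pos yk0 (prime_gt0 pp))) (lognM p k0 (prime_gt0 pp)).
rewrite (logn_prime p pp) eqxx leq_add //.
  by apply: IH => //; rewrite -ltnS (leq_trans km).
rewrite leqNgt; apply/negP => H2.
have := gs_sq pp p2 Hyk; rewrite (pfactor_dvdn 2 pp (gs_pos yk0 (prime_gt0 pp))).
by move=> /negP; apply; exact: H2.
Qed.

Lemma logn2_odd m : odd m -> logn 2 m = 0.
Proof. by move=> Hm; rewrite logn_coprime // coprime2n. Qed.

Lemma logn2_double m : 0 < m -> logn 2 (2 * m) = (logn 2 m).+1.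
Proof. by move=> m0; rewrite lognM // logn_prime. Qed.

Lemma odd_sq z : odd z -> exists w, z ^ 2 = 4 * w + 1.
Proof.
move=> Hz; have := odd_double_half z; rewrite Hz => Hd.
move: Hd; set h := z./2 => Hd.
exists (h * h + h); rewrite -Hd -muln2 /nat_of_bool expnS expn1; ring.
Qed.

Lemma L2 r a : odd r -> 1 < r -> 0 < a ->
  logn 2 (r ^ a - 1) <= logn 2 (r ^ 2 - 1) + logn 2 a.
Proof.
move=> ro r1.
have r0 : 0 < r by apply: ltnW.
have r21 : 0 < r ^ 2 - 1 by rewrite subn_gt0 -{1}(exp1n 2) ltn_exp2r.
elim: a {-2}a (leqnn a) => [|M IH] a Ha a0; first by move: a0; rewrite leqNgt (leq_ltn_trans Ha).
case: (boolP (odd a)) => ao.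
  rewrite gs_sub // mulnC logn_Gauss ?coprime2n ?gs_odd //.
  apply: (leq_trans _ (leq_addr (logn 2 a) _)).
  apply: dvdn_leq_log => //; rewrite gs_sub // dvdn_mulr //.
have Ha2 : a = 2 * a./2 by have := odd_double_half a; rewrite (negbTE ao) add0n -muln2 mulnC.
set b := a./2 in Ha2; clearbody b.
have b0 : 0 < b by move: a0; rewrite Ha2 muln_gt0 => /andP [].
have ba : b < a by move: b0 Ha2; clear; lia.
rewrite Ha2 logn2_double //.
case: (boolP (odd b)) => bo.
  rewrite expnM gs_sub ?expn_gt0 ?r0 // mulnC logn_Gauss ?coprime2n ?gs_odd ?oddX ?ro ?orbT //.
  by rewrite leq_addr.
have -> : r ^ (2 * b) - 1 = (r ^ b - 1) * (r ^ b + 1).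
  by rewrite mulnC expnM -subn_sqr exp1n.
rewrite lognM; last 2 first.
- by rewrite subn_gt0 -{1}(exp1n b) ltn_exp2r // -lt0n.
- by rewrite addn1.
have Hb2 : b = 2 * b./2 by have := odd_double_half b; rewrite (negbTE bo) add0n -muln2 mulnC.
have [w Hw] : exists w, r ^ b = 4 * w + 1.
  rewrite Hb2 (mulnC 2) expnM; apply: odd_sq; by rewrite oddX ro orbT.
have -> : logn 2 (r ^ b + 1) = 1.
  rewrite Hw -addnA (_ : 4 * w + (1 + 1) = 2 * (2 * w + 1)); last by ring.
  rewrite logn2_double; last by rewrite addn1.
  by rewrite logn2_odd // oddD oddM.
rewrite addn1 addnS ltnS; apply: IH => //.
by rewrite -ltnS (leq_trans ba).
Qed.

Lemma big_ineq f : 25 <= f -> 4 * (f * f + 1) * (f * f) < 2 ^ f.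
Proof.
move=> Hf.
have H5 : forall k, (23 + k) ^ 5 < 2 ^ (23 + k).
  elim=> [|k IH]; first by lia.
  have : (23 + k).+1 ^ 5 <= 2 * (23 + k) ^ 5.
    rewrite !expnS expn0; nia.
  rewrite addnS (expnS 2); move: IH; set A := (23 + k).+1 ^ 5; set B := (23 + k) ^ 5; set C := 2 ^ (23 + k); lia.
have := H5 (f - 23); rewrite subnKC; last by apply: leq_trans Hf.
move=> H; apply: leq_ltn_trans H; rewrite !expnS expn0; nia.
Qed.


Lemma E2 p e : (p %| 2 ^ e - 1) = (2 ^ e == 1 %[mod p]).
Proof. exact: E_dvd. Qed.

Lemma ppd_of f n g s : prime n -> 0 < g -> g %| f -> ~~ (n %| f %/ g) -> prime s ->
  s %| gs (2 ^ g) n -> ~~ (s %| 2 ^ g - 1) -> ppd (2 ^ f) n s.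
Proof.
move=> pn g0 gf nfg ps sgs sg.
have x0 : 0 < 2 ^ g by rewrite expn_gt0.
have Egn : 2 ^ (g * n) = 1 %[mod s].
  by apply/eqP; rewrite -E2 expnM gs_sub // dvdn_mull.
have Hf : f = g * (f %/ g) by rewrite mulnC divnK.
move: nfg Hf; set c := f %/ g => nfg Hf; clearbody c.
rewrite /ppd ps /=; apply/andP; split.
  rewrite -expnM E2 Hf -mulnA (mulnC c n) mulnA; apply/eqP; exact: E_mul.
apply/forallP => i; apply/implyP => i0; apply/negP => Hi.
have Efi : 2 ^ (f * i) = 1 %[mod s] by apply/eqP; rewrite -E2 expnM.
have := E_gcd Efi Egn.
have -> : gcdn (f * i) (g * n) = g.
  rewrite Hf -mulnA -muln_gcdr.
  have cop : coprime (c * i) n.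
    rewrite coprimeMl coprime_sym prime_coprime // nfg /= coprime_sym prime_coprime //.
    by rewrite gtnNdvd.
  by rewrite (eqP cop) muln1.
by move=> Eg; move: sg; rewrite E2 Eg eqxx.
Qed.

Unset Implicit Arguments. Set Strict Implicit.

Theorem lemma2p11 (n f r : nat) :
  prime n -> 5 <= n -> odd n -> 0 < f ->
  ppd (2 ^ f) n r -> (forall p, ppd (2 ^ f) n p -> p = r) ->
  4 * n * f + 1 <= r.
Proof.
move=> pn n5 nodd f0 Hr Hu.
have n2 : 2 < n by apply: leq_trans n5.
have n0 : 0 < n := prime_gt0 pn.
case/and3P: (Hr) => pr rdiv /forallP rnd.
have r1 : ~~ (r %| 2 ^ f - 1).
  have n1 : 1 < n by apply: ltn_trans n2.
  by have := rnd (Ordinal n1); rewrite /= expn1.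
have Efn : 2 ^ (f * n) = 1 %[mod r] by apply/eqP; rewrite -E2 expnM.
have rodd : odd r.
  apply: contraT => ro; have r2 : 2 %| r by rewrite dvdn2.
  have r2' : r = 2 by move: r2; rewrite dvdn_prime2 // => /eqP.
  move: rdiv; rewrite r2' -expnM dvdn2 oddB ?expn_gt0 // oddX.
  have fn0 : (f * n == 0) = false by rewrite muln_eq0 !eqn0Ngt f0 n0.
  by rewrite fn0.
have r2 : 2 < r by apply: odd_prime_gt2.
have fn0 : 0 < f * n by rewrite muln_gt0 f0 n0.
have [o [o0 Ho]] := @order_ex 2 r (f * n) fn0 Efn.
have onf : o %| f * n by rewrite -Ho; apply/eqP.
have onotf : ~~ (o %| f) by rewrite -Ho -E2.
have no : n %| o.
  apply: contraR onotf => Hno.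
  have cop : coprime o n by rewrite coprime_sym prime_coprime.
  by rewrite -(Gauss_dvdl f cop).
have Hog : o = o %/ n * n by rewrite divnK.
move: Hog; set g := o %/ n => Hog; clearbody g.
have g0 : 0 < g by move: o0; rewrite Hog muln_gt0 => /andP [].
have gf : g %| f by rewrite -(dvdn_pmul2r n0) -Hog.
have ngf : ~~ (n %| f %/ g).
  apply/negP => H; move: onotf; rewrite Hog.
  case/dvdnP: H => c Hc.
  have -> : f = c * (g * n) by rewrite -(divnK gf) Hc; ring.
  by rewrite dvdn_mull.
have stepD : forall g', 0 < g' -> g' %| f -> ~~ (n %| f %/ g') -> g %| g'.
  move=> g' g'0 g'f ng'.
  have x1 : 1 < 2 ^ g' by rewrite -{1}(expn0 2) ltn_exp2l.
  have [s [ps sgs sx]] := T pn n2 x1.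
  have Hsr := Hu s (ppd_of pn g'0 g'f ng' ps sgs sx).
  rewrite Hsr in sgs.
  have : 2 ^ (g' * n) = 1 %[mod r].
    by apply/eqP; rewrite -E2 expnM gs_sub ?expn_gt0 // dvdn_mull.
  by move/eqP; rewrite Ho Hog (dvdn_pmul2r n0).
set q := 2 ^ f.
have q1 : 1 < q by rewrite /q -{1}(expn0 2) ltn_exp2l.
have q0 : 0 < q by apply: ltnW.
set Phi := gs q n.
have Phi0 : 0 < Phi by apply: gs_pos.
have [u cu HPhi] := pfactor_coprime pr Phi0.
have u0 : 0 < u by move: Phi0; rewrite HPhi muln_gt0 => /andP [].
have ubound : u = 1 \/ (u = n /\ n %| q - 1).
  have uPhi : u %| Phi by rewrite HPhi dvdn_mulr.
  have Hs : forall s, prime s -> s %| u -> s %| q - 1 /\ s = n.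
    move=> s ps su.
    have sPhi : s %| Phi := dvdn_trans su uPhi.
    have sq : s %| q - 1.
      apply: contraT => nsq.
      have nf1 : ~~ (n %| f %/ f).
        by rewrite divnn f0 dvdn1; apply/eqP => H; move: n2; rewrite H.
      have Hsr := Hu s (ppd_of pn f0 (dvdnn f) nf1 ps sPhi nsq).
      by move: cu; rewrite prime_coprime // -Hsr su.
    split => //.
    have := gsn_dvd q0 sq sPhi.
    by rewrite dvdn_prime2 // => /eqP.
  case: (ltngtP u 1) => [|u1|->]; [by rewrite ltnS leqn0 => /eqP H; rewrite H in u0 | | by left].
  have [nq pdn] := Hs _ (pdiv_prime u1) (pdiv_dvd u).
  rewrite pdn in nq; right.
  have Hq : q = 1 %[mod n] by apply/eqP; rewrite -(expn1 q) -E_dvd // expn1.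
  have nPhi2 := gs_sq pn n2 Hq.
  have nu2 : ~~ (n ^ 2 %| u) by apply: contra nPhi2 => H; apply: dvdn_trans H uPhi.
  case: (P1 pn u0 (fun s ps su => (Hs s ps su).2) nu2) => Hu1.
    by move: u1; rewrite Hu1.
  by [].
have Phidvd : Phi %| q ^ n - 1 by rewrite gs_sub // dvdn_mull.
have qn0 : 0 < q ^ n - 1.
  by rewrite subn_gt0 -{1}(exp1n n) ltn_exp2r.
have gEf : g = f.
  apply/eqP; apply: contraT => gnf.
  have glt : g < f by rewrite ltn_neqAle gnf dvdn_leq.
  have Hfm : f = g * (f %/ g) by rewrite mulnC divnK.
  move: Hfm; set m := f %/ g => Hfm; clearbody m.
  have m2 : 2 <= m by move: glt f0; rewrite Hfm; clear; nia.
  have m0 : 0 < m by apply: leq_trans m2.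
  set y := 2 ^ (g * n).
  have Ey : y = 1 %[mod r] by apply/eqP; rewrite /y Ho Hog.
  have y0 : 0 < y by rewrite expn_gt0.
  have y1 : 1 < y by rewrite /y -{1}(expn0 2) ltn_exp2l // muln_gt0 g0 n0.
  have Hqn : q ^ n - 1 = (y - 1) * gs y m.
    rewrite -gs_sub // /q /y -!expnM Hfm; congr (2 ^ _ - 1); ring.
  have A_le : logn r Phi <= logn r (y - 1) + logn r m.
    apply: leq_trans (dvdn_leq_log r qn0 Phidvd) _.
    rewrite Hqn lognM ?subn_gt0 ?gs_pos // leq_add //.
    exact: lte pr r2 Ey y0 m0.
  have lpow : forall x, 0 < x -> r ^ logn r x <= x.
    by move=> x x0; apply: dvdn_leq => //; apply: pfactor_dvdnn.
  have rA : r ^ logn r Phi <= (y - 1) * m.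
    apply: leq_trans (leq_pexp2l (prime_gt0 pr) A_le) _.
    by rewrite expnD leq_mul // lpow // subn_gt0.
  have uq : u <= q - 1.
    case: ubound => [-> | [-> nq]]; first by rewrite subn_gt0.
    by apply: dvdn_leq => //; rewrite subn_gt0.
  have Phi_ge : q ^ n.-1 <= Phi := gs_ge_last _ n0.
  have key : q ^ n.-1 <= (q - 1) * ((y - 1) * m).
    by apply: leq_trans Phi_ge _; rewrite HPhi leq_mul.
  have Hm : m <= 2 ^ m.-1.
    by have := ltn_expl m.-1 (isT : 1 < 2); rewrite prednK.
  have Hexp : f + g * n + m.-1 <= f * n.-1.
    move: n5 m2 g0; rewrite Hfm; clear; move=> *; nia.
  have Hpow : q * y * 2 ^ m.-1 <= q ^ n.-1.
    by rewrite /q /y -!expnD -expnM leq_pexp2l.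
  have K0 : 0 < 2 ^ m.-1 by rewrite expn_gt0.
  move: key Hpow Hm q1 y1 K0; set Q := q; set Y := y; set K := 2 ^ m.-1; set Z := Q ^ n.-1.
  clearbody Q Y K Z; clear => key Hpow Hm q1 y1 K0.
  have h1 : (Q - 1) * ((Y - 1) * m) <= (Q - 1) * ((Y - 1) * K) by rewrite leq_mul // leq_mul.
  have h2 : (Q - 1) * ((Y - 1) * K) < Q * Y * K.
    rewrite mulnA ltn_pmul2r //; apply: ltn_mul; rewrite ltn_subrL //; by apply: ltnW.
  move: (leq_trans key h1) h2 Hpow; clear; lia.
have Hof : o = f * n by rewrite Hog gEf.
set k := logn n f.
have nk0 : 0 < n ^ k by rewrite expn_gt0 n0.
have nkf : n ^ k %| f by apply: pfactor_dvdnn.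
have nnk : ~~ (n %| f %/ n ^ k).
  apply/negP => /dvdnP [c Hc].
  have : n ^ k.+1 %| f by rewrite -(divnK nkf) Hc expnS -mulnA dvdn_mull.
  by rewrite pfactor_dvdn // ltnn.
have fk : f %| n ^ k by rewrite -gEf; apply: stepD.
have Hfk : f = n ^ k by apply/eqP; rewrite eqn_dvd fk nkf.
have fodd : odd f by rewrite Hfk oddX nodd orbT.
have r_2 : ~~ (r %| 2).
  by apply/negP => /dvdn_leq H; move: (H isT); rewrite leqNgt r2.
have Ferm := fermat1 pr r_2.
have fn_r : f * n %| r.-1 by rewrite -Hof -Ho; apply/eqP.
have two_r : 2 %| r.-1 by rewrite dvdn2 -oddS prednK // prime_gt0.
have tfn : 2 * (f * n) %| r.-1 by rewrite Gauss_dvd ?coprime2n ?oddM ?fodd ?nodd // two_r fn_r.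
have Hrp : r = r.-1.+1 by rewrite prednK // prime_gt0.
case/dvdnP: tfn => c Hc.
case: c Hc => [|[|c]] Hc.
- by move: r2; rewrite Hrp Hc.
- have Hr1 : r = 2 * (f * n) + 1 by rewrite Hrp Hc mul1n addn1.
  have u1 : u = 1.
    case: ubound => // [[_ nq]].
    have Eqn : 2 ^ f = 1 %[mod n] by apply/eqP; rewrite -E2.
    have n_2 : ~~ (n %| 2).
      by apply/negP => /dvdn_leq H; move: (H isT); rewrite leqNgt n2.
    have Fn := fermat1 pn n_2.
    have := E_gcd Eqn Fn.
    have -> : gcdn f n.-1 = 1 by apply/eqP; rewrite Hfk; apply: coprimeXl; apply: coprimenP.
    rewrite expn1 !modn_small //; last by apply: ltn_trans n2.
  rewrite u1 mul1n in HPhi.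
  move: HPhi; set A := logn r Phi => HPhi; clearbody A.
  have A0 : 0 < A.
    rewrite lt0n; apply/negP => /eqP HA; move: HPhi; rewrite HA expn0 => HP1.
    have := gs_ge_m n q0; rewrite -/Phi HP1 => H; move: H n5; clear; lia.
  have r1' : 1 < r by apply: ltn_trans r2.
  have lpow : forall x, 0 < x -> 2 ^ logn 2 x <= x.
    by move=> x x0; apply: dvdn_leq => //; apply: pfactor_dvdnn.
  move: Hfk; clearbody k; clear nk0 nkf nnk fk; case: k => [|[|k]] Hfk.
  +
    rewrite expn0 in Hfk.
    have HP2 : Phi = 2 ^ n - 1 by rewrite /Phi /q Hfk expn1 (gs_sub n (isT : 0 < 2)) mul1n.
    rewrite Hfk mul1n in Hr1.
    have n2p : 32 <= 2 ^ n by rewrite (leq_pexp2l (isT : 0 < 2) n5).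
    have Aodd : odd A.
      apply: contraT => Ae.
      have HA2 : A = 2 * A./2 by have := odd_double_half A; rewrite (negbTE Ae) add0n -muln2 mulnC.
      have [w Hw] : exists w, r ^ A = 4 * w + 1.
        by rewrite HA2 (mulnC 2) expnM; apply: odd_sq; rewrite oddX rodd orbT.
      have H4 : 2 ^ n = 4 * 2 ^ (n - 2) by rewrite -(expnD 2 2) subnKC // ltnW.
      move: HPhi; rewrite HP2 Hw H4; move: (2 ^ (n - 2)) => P.
      by clear; lia.
    have HrA : r ^ A = 2 ^ n - 1 by rewrite -HPhi.
    have H2A : r ^ (2 * A) - 1 = (2 ^ n - 2) * 2 ^ n.
      rewrite mulnC expnM -(exp1n 2) subn_sqr HrA exp1n.
      have : 1 <= 2 ^ n by apply: leq_trans n2p.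
      move: (2 ^ n) => P HP; congr (_ * _); clear -HP; lia.
    have lowb : n.+1 <= logn 2 (r ^ (2 * A) - 1).
      rewrite -pfactor_dvdn //; last first.
        by rewrite H2A muln_gt0 expn_gt0 /= subn_gt0 (leq_trans _ n2p).
      rewrite H2A expnS dvdn_mul //.
      have -> : 2 ^ n - 2 = 2 * (2 ^ n.-1 - 1) by rewrite mulnBr muln1 -expnS prednK.
      by rewrite dvdn_mulr.
    have A2 : 0 < 2 * A by rewrite muln_gt0 A0.
    have upb := L2 rodd r1' A2.
    rewrite (logn2_double A0) (logn2_odd Aodd) in upb.
    have Hr2 : r ^ 2 - 1 = 2 * (2 * (n * n.+1)).
      have -> : r ^ 2 = 2 * (2 * (n * n.+1)) + 1 by rewrite Hr1; ring.
      by rewrite addnK.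
    have nn0 : 0 < n * n.+1 by rewrite muln_gt0 n0.
    have l1 : logn 2 (2 * (2 * (n * n.+1))) = (logn 2 n.+1).+2.
      rewrite logn2_double; last by rewrite muln_gt0.
      by rewrite logn2_double // (lognM 2 n0 (isT : 0 < n.+1)) (logn2_odd nodd).
    rewrite Hr2 l1 in upb.
    have L := lpow n.+1 isT.
    have : n - 2 <= logn 2 n.+1 by move: (leq_trans lowb upb); clear; lia.
    move=> /(leq_pexp2l (isT : 0 < 2)) HL.
    have H8 : 2 ^ (n - 2) = 8 * 2 ^ (n - 5).
      by rewrite -(expnD 2 3); congr (2 ^ _); move: n5; clear; lia.
    have := ltn_expl (n - 5) (isT : 1 < 2).
    move: (leq_trans HL L); rewrite H8; move: (2 ^ (n - 5)) => P.
    by move: n5; clear; lia.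
  +
    rewrite expn1 in Hfk.
    have n3 : n %% 3 != 0.
      apply/negP => /eqP H3.
      have : 3 %| n by rewrite /dvdn H3.
      rewrite dvdn_prime2 // => /eqP H; move: n5; rewrite -H.
      by [].
    have : 3 %| r.
      rewrite Hr1 Hfk (divn_eq n 3).
      have : n %% 3 < 3 by rewrite ltn_mod.
      move: n3; set a := n %/ 3; set b := n %% 3; clearbody a b.
      case: b => [|[|[|b]]] //= _ _; apply/dvdnP.
        by exists (6 * a * a + 4 * a + 1); ring.
      by exists (6 * a * a + 8 * a + 3); ring.
    rewrite dvdn_prime2 // => /eqP H3.
    move: Hr1 n5; rewrite -H3 Hfk; clear; nia.
  +
    have nnf : n * n <= f.
      by rewrite Hfk mulnn; apply: leq_pexp2l.
    have nf : n <= f by apply: leq_trans nnf; rewrite leq_pmulr.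
    have f25 : 25 <= f by apply: leq_trans nnf; move: n5; clear; nia.
    have qPhi : q %| Phi - 1.
      by rewrite /Phi -(prednK n0) gs_shift addKn dvdn_mulr.
    have Phi1 : 1 < Phi.
      by apply: leq_trans (gs_ge_m n q0); apply: ltn_trans n2.
    have rA1 : 0 < r ^ A - 1 by rewrite -HPhi subn_gt0.
    have lowb : f <= logn 2 (r ^ A - 1).
      by rewrite -pfactor_dvdn // -HPhi.
    have upb := L2 rodd r1' A0.
    have fnodd : odd (f * n) by rewrite oddM fodd nodd.
    have Hr2 : r ^ 2 - 1 = 2 * (2 * ((f * n) * (f * n).+1)).
      have -> : r ^ 2 = 2 * (2 * ((f * n) * (f * n).+1)) + 1 by rewrite Hr1; ring.
      by rewrite addnK.
    have l1 : logn 2 (2 * (2 * ((f * n) * (f * n).+1))) = (logn 2 (f * n).+1).+2.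
      rewrite logn2_double; last by rewrite !muln_gt0 f0 n0.
      rewrite logn2_double; last by rewrite muln_gt0 fn0.
      by rewrite (lognM 2 fn0 (isT : 0 < (f * n).+1)) (logn2_odd fnodd).
    rewrite Hr2 l1 in upb.
    have AL : A < f * n.
      have h1 : 2 ^ A <= r ^ A by rewrite leq_exp2r // ltnW.
      have h2 : Phi < q ^ n.
        have := gs_id n q0; rewrite -/Phi => <-.
        by rewrite addn1 ltnS leq_pmull // subn_gt0.
      by rewrite -(ltn_exp2l _ _ (isT : 1 < 2)) expnM; apply: leq_ltn_trans h1 _; rewrite -HPhi.
    have LA := lpow A A0.
    have LB := lpow (f * n).+1 isT.
    have E : 2 ^ f <= 2 ^ (logn 2 (f * n).+1).+2 * 2 ^ logn 2 A.
      by rewrite -expnD leq_pexp2l // (leq_trans lowb upb).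
    have B := big_ineq f25.
    have E2' : 2 ^ (logn 2 (f * n).+1).+2 * 2 ^ logn 2 A <= 4 * (f * n).+1 * A.
      rewrite !expnS; move: (leq_mul LB LA); move: (2 ^ logn 2 (f * n).+1) (2 ^ logn 2 A) => X Y; clear; nia.
    have E3 : 4 * (f * n).+1 * A <= 4 * (f * n).+1 * (f * n).
      by rewrite leq_mul // ltnW.
    have E4 : 4 * (f * n).+1 * (f * n) <= 4 * (f * f + 1) * (f * f).
      rewrite leq_mul // ?leq_mul // ?addn1 ltnS leq_mul //.
    move: (leq_trans E (leq_trans E2' (leq_trans E3 E4))) B.
    move: (2 ^ f) => P; move: (4 * (f * f + 1) * (f * f)) => Q; clear; lia.
- rewrite Hrp Hc; clear; nia.
Qed.
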